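(* Assume the instance is non-degenerate and let $x\in S\cap\mathbb{R}^n$ be such that the (underlying undirected graph of the) tangent digraph $\mathcal{G}(x)$ is a spanning tree. If $x$ is not a local optimum, then there exists $e\in E^\circ(x)$ such that $V(\mathcal{T}(e,x))$ is a feasible descent direction at $x$.
   Context: $\mathbb{R}_{\max}=\mathbb{R}\cup\{-\infty\}$, $\chi_J$ the indicator vector of $J$. Data: $A^\pm=(a^\pm_{i,j})\in\mathbb{R}_{\max}^{m\times n}$, $C=(c_{k,j})\in\mathbb{R}_{\max}^{p\times n}$, $\mu^+\in\mathbb{Z}_{\ge0}^p$, $\mu^-\in\mathbb{Z}_{\ge0}^n$; $A=(a_{i,j})$, $a_{i,j}=\max(a^+_{i,j},a^-_{i,j})$. $f(x)=\sum_k\mu^+_k\max_j(c_{k,j}+x_j)-\sum_j\mu^-_jx_j$; $S=\{x:\max_j(a^+_{i,j}+x_j)\ge\max_j(a^-_{i,j}+x_j)\ \forall i\}$. Standing assumptions: each row of $A$ and $C$ has a finite entry; $\sum_k\mu^+_k=\sum_j\mu^-_j$; the undirected graph on $\{u_k\}\cup[n]\cup\{w_i\}$ with edges $\{u_k,j\}$ ($c_{k,j}\ne-\infty$), $\{w_i,j\}$ ($a_{i,j}\ne-\infty$) is connected. Non-degenerate: no square submatrix of $Q$ ($C$ stacked above $A$) with finite tropical determinant $\max_\sigma\sum_iq_{i,\sigma(i)}$ has two permutations attaining that maximum. $x\in S\cap\mathbb{R}^n$ is a local optimum if there is $\delta>0$ with $f(y)\ge f(x)$ for all $y\in S\cap\mathbb{R}^n$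 with $\max_j|x_j-y_j|<\delta$. $\epsilon(x)$ is the smallest positive value among $|(a_{i,j_1}+x_{j_1})-(a_{i,j_2}+x_{j_2})|$ and $|(c_{k,j_1}+x_{j_1})-(c_{k,j_2}+x_{j_2})|$; $J\subset[n]$ is a feasible descent direction at $x$ if $x+\delta\chi_J\in S$ and $f(x+\delta\chi_J)<f(x)$ for all $0<\delta<\epsilon(x)$. Tangent digraph $\mathcal{G}(x)$: vertices $U=\{u_1..u_p\}$, $V=[n]$, $W=\{w_1..w_m\}$; $E_1(x)=\{(u_k,j):\max_{j'}(c_{k,j'}+x_{j'})=c_{k,j}+x_j\}$, $E_2(x)=\{(w_i,j):\max_{j'}(a_{i,j'}+x_{j'})=a^-_{i,j}+x_j\}$, $E_3(x)=\{(j,w_i):\max_{j'}(a_{i,j'}+x_{j'})=a^+_{i,j}+x_j\}$. $\mathcal{N}^-_V(w_i,x)=\{j:(j,w_i)\in E_3(x)\}$; $E^\circ(x)=E_1(x)\cup E_2(x)\cup\{(j,w_i)\in E_3(x):|\mathcal{N}^-_V(w_i,x)|\ge2\}$. For an edge $e$, removing $e$ from the tree $\mathcal{G}(x)$ leaves two trees, and $\mathcal{T}(e,x)$ is the one containing the endpoint of $e$ in $U\cup W$; $V(\mathcal{T}(e,x))$ is its vertex set in $V$. *)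

(* Defs.v *)
From HB Require Import structures.
From mathcomp Require Import all_boot all_order all_algebra perm.
From mathcomp Require Import reals.

Set Implicit Arguments.
Unset Strict Implicit.
Unset Printing Implicit Defensive.

Import Order.TTheory GRing.Theory Num.Theory.
Local Open Scope ring_scope.

(* Max-plus semiring R_max = R ∪ {-oo}, encoded as option R with None = -oo. *)
Section TropLP.
Variable R : realType.

Definition omax (a b : option R) : option R :=
  match a, b with
  | None, _ => b
  | _, None => a
  | Some x, Some y => Some (Num.max x y)
  end.

Definition oadd (a b : option R) : option R :=
  match a, b with
  | Some x, Some y => Some (x + y)
  | _, _ => None
  end.

Definition ole (a b : option R) : bool :=
  match a, b with
  | None, _ => true
  | Some _, None => false
  | Some x, Some y => x <= y
  end.

Variables m n p : nat.

Record instance := Instance {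
  Ap  : 'I_m -> 'I_n -> option R;
  Am  : 'I_m -> 'I_n -> option R;
  Cm  : 'I_p -> 'I_n -> option R;
  mup : 'I_p -> nat;
  mum : 'I_n -> nat }.

Variable I : instance.

Definition tmaxv (a : 'I_n -> option R) (x : 'I_n -> R) : option R :=
  \big[omax/None]_(j < n) omap (fun v => v + x j) (a j).

Definition Aent (i : 'I_m) (j : 'I_n) : option R := omax (Ap I i j) (Am I i j).

Definition fobj (x : 'I_n -> R) : R :=
  \sum_(k < p) (mup I k)%:R * odflt 0 (tmaxv (Cm I k) x)
  - \sum_(j < n) (mum I j)%:R * x j.

Definition inS (x : 'I_n -> R) : Prop :=
  forall i : 'I_m, ole (tmaxv (Am I i) x) (tmaxv (Ap I i) x).

Definition rows_finite : Prop :=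
  (forall i : 'I_m, exists j : 'I_n, Aent i j != None) /\
  (forall k : 'I_p, exists j : 'I_n, Cm I k j != None).

Definition balanced : Prop := (\sum_(k < p) mup I k = \sum_(j < n) mum I j)%N.

Definition vertex := ('I_p + 'I_n + 'I_m)%type.
Definition vu (k : 'I_p) : vertex := inl (inl k).
Definition vv (j : 'I_n) : vertex := inl (inr j).
Definition vw (i : 'I_m) : vertex := inr i.

Definition data_adj : rel vertex := fun a b =>
  match a, b with
  | inl (inl k), inl (inr j) => Cm I k j != None
  | inl (inr j), inl (inl k) => Cm I k j != None
  | inr i, inl (inr j) => Aent i j != None
  | inl (inr j), inr i => Aent i j != None
  | _, _ => false
  end.

Definition data_connected : Prop := forall a b : vertex, connect data_adj a b.

(* Q = C stacked above A; rows indexed by 'I_p + 'I_m *)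
Definition qent (r : 'I_p + 'I_m) (j : 'I_n) : option R :=
  match r with inl k => Cm I k j | inr i => Aent i j end.

Definition pweight k (r : 'I_k -> 'I_p + 'I_m) (c : 'I_k -> 'I_n) (s : 'S_k)
  : option R := \big[oadd/Some 0]_(i < k) qent (r i) (c (s i)).

(* non-degeneracy: in every square submatrix with finite tropical determinant,
   the maximum over permutations is attained by exactly one permutation *)
Definition nondegenerate_inst : Prop :=
  forall k (r : 'I_k -> 'I_p + 'I_m) (c : 'I_k -> 'I_n),
    injective r -> injective c ->
    forall (s1 s2 : 'S_k) (w1 w2 : R),
      pweight r c s1 = Some w1 -> pweight r c s2 = Some w2 ->
      (forall t w, pweight r c t = Some w -> w <= w1) ->
      (forall t w, pweight r c t = Some w -> w <= w2) ->
      s1 = s2.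

(* edges: E1 (u_k, j) = inl (inl (k, j)); E2 (w_i, j) = inl (inr (i, j));
   E3 (j, w_i) = inr (j, i) *)
Definition edge := ('I_p * 'I_n + 'I_m * 'I_n + 'I_n * 'I_m)%type.

Definition in_edge (x : 'I_n -> R) (e : edge) : bool :=
  match e with
  | inl (inl (k, j)) => tmaxv (Cm I k) x == omap (fun v => v + x j) (Cm I k j)
  | inl (inr (i, j)) => tmaxv (Aent i) x == omap (fun v => v + x j) (Am I i j)
  | inr (j, i) => tmaxv (Aent i) x == omap (fun v => v + x j) (Ap I i j)
  end.

Definition ends (e : edge) : vertex * vertex :=
  match e with
  | inl (inl (k, j)) => (vu k, vv j)
  | inl (inr (i, j)) => (vw i, vv j)
  | inr (j, i) => (vv j, vw i)
  end.

(* adjacency of the underlying undirected (multi)graph of G(x),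
   with the edge ex removed when ex = Some e *)
Definition tadj (x : 'I_n -> R) (ex : option edge) : rel vertex := fun a b =>
  [exists e : edge, [&& in_edge x e, Some e != ex &
     (ends e == (a, b)) || (ends e == (b, a))]].

(* underlying undirected graph of G(x) is a spanning tree (on all of
   U ∪ V ∪ W): connected, and removing any edge disconnects its endpoints *)
Definition spanning_tree (x : 'I_n -> R) : Prop :=
  (forall a b : vertex, connect (tadj x None) a b) /\
  (forall e : edge, in_edge x e ->
     ~~ connect (tadj x (Some e)) (ends e).1 (ends e).2).

Definition uw_end (e : edge) : vertex :=
  match e with
  | inl (inl (k, _)) => vu k
  | inl (inr (i, _)) => vw i
  | inr (_, i) => vw i
  end.

Definition VT (x : 'I_n -> R) (e : edge) : {set 'I_n} :=
  [set j | connect (tadj x (Some e)) (uw_end e) (vv j)].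

Definition Nminus (x : 'I_n -> R) (i : 'I_m) : {set 'I_n} :=
  [set j | in_edge x (inr (j, i))].

Definition in_Ecirc (x : 'I_n -> R) (e : edge) : bool :=
  match e with
  | inr (j, i) => in_edge x e && (1 < #|Nminus x i|)%N
  | _ => in_edge x e
  end.

Definition shift (x : 'I_n -> R) (J : {set 'I_n}) (d : R) : 'I_n -> R :=
  fun j => x j + (if j \in J then d else 0).

(* d < eps(x): d is smaller than every positive value among the differences
   |(a_{i,j1}+x_{j1}) - (a_{i,j2}+x_{j2})| and |(c_{k,j1}+x_{j1}) - (c_{k,j2}+x_{j2})|
   (finite entries only); if there is no positive value, eps(x) = +oo *)
Definition below_eps (x : 'I_n -> R) (d : R) : Prop :=
  (forall i j1 j2 a1 a2, Aent i j1 = Some a1 -> Aent i j2 = Some a2 ->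
     0 < `|(a1 + x j1) - (a2 + x j2)| -> d < `|(a1 + x j1) - (a2 + x j2)|) /\
  (forall k j1 j2 c1 c2, Cm I k j1 = Some c1 -> Cm I k j2 = Some c2 ->
     0 < `|(c1 + x j1) - (c2 + x j2)| -> d < `|(c1 + x j1) - (c2 + x j2)|).

Definition feasible_descent (x : 'I_n -> R) (J : {set 'I_n}) : Prop :=
  forall d : R, 0 < d -> below_eps x d ->
    inS (shift x J d) /\ fobj (shift x J d) < fobj x.

Definition local_optimum (x : 'I_n -> R) : Prop :=
  exists2 d : R, 0 < d &
    forall y : 'I_n -> R, inS y -> (forall j, `|x j - y j| < d) ->
      fobj x <= fobj y.

End TropLP.

(* Main.v *)
Require Import Defs.
From HB Require Import structures.
From mathcomp Require Import all_boot all_order all_algebra perm.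
From mathcomp Require Import reals.
From mathcomp Require Import lra.

From Stdlib Require Import Classical.
Set Implicit Arguments.
Unset Strict Implicit.
Unset Printing Implicit Defensive.
Import Order.TTheory GRing.Theory Num.Theory.
Local Open Scope ring_scope.

Section Omax.
Variable R : realType.
Variable n : nat.

Lemma omax_someP (o1 o2 : option R) v : omax o1 o2 = Some v -> o1 = Some v \/ o2 = Some v.
Proof.
case: o1 => [a|]; case: o2 => [b|] //= [<-]; [|by left|by right].
rewrite /Num.max; case: ifP => _; by [right|left].
Qed.

Lemma omax_geL (o1 o2 : option R) a : o1 = Some a -> exists v, omax o1 o2 = Some v /\ a <= v.
Proof. move=> ->; case: o2 => [b|] /=; eexists; split; eauto; rewrite ?le_max ?lexx //. Qed.

Lemma omax_geR (o1 o2 : option R) a : o2 = Some a -> exists v, omax o1 o2 = Some v /\ a <= v.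
Proof. move=> ->; case: o1 => [b|] /=; eexists; split; eauto; rewrite ?le_max ?lexx ?orbT //. Qed.

Lemma tmaxv_att (a : 'I_n -> option R) y v : tmaxv a y = Some v ->
  exists j c, a j = Some c /\ v = c + y j.
Proof.
rewrite /tmaxv; move: v.
apply: (big_ind (fun o => forall v, o = Some v -> exists j c, a j = Some c /\ v = c + y j)) => //.
- move=> o1 o2 H1 H2 v /omax_someP [/H1|/H2] //.
- move=> j _ v; case E: (a j) => [c|] //= => -[<-]; by exists j, c.
Qed.

Lemma tmaxv_ge (a : 'I_n -> option R) y j c : a j = Some c ->
  exists v, tmaxv a y = Some v /\ c + y j <= v.
Proof.
move=> Ha; rewrite /tmaxv.
have : j \in index_enum 'I_n by rewrite mem_index_enum.
elim: (index_enum _) => [|k s IH] //; rewrite in_cons big_cons.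
case/orP => [/eqP <-|/IH [v [Hv Hle]]].
- apply: omax_geL; by rewrite Ha.
- have [w [Hw Hvw]] := omax_geR (omap (fun v => v + y k) (a k)) Hv.
  exists w; split => //; exact: le_trans Hle Hvw.
Qed.

Lemma tmaxv_le (a : 'I_n -> option R) y v B : tmaxv a y = Some v ->
  (forall j c, a j = Some c -> c + y j <= B) -> v <= B.
Proof. by move=> /tmaxv_att [j [c [Ha ->]]] H; apply: H. Qed.

End Omax.

Section Conn.
Variable T : finType.

Lemma connect_sub_or (G G' : rel T) c a b :
  (forall u v, G u v -> G' u v \/ u = c \/ v = c) ->
  connect G a b -> connect G' a b \/ connect G a c.
Proof.
move=> HG /connectP [s Hp ->]; elim: s a Hp => [|a1 s IH] a /=.
  by left.
case/andP=> Ha Hp; have [H1|H1] := IH _ Hp.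
- have [H|[H|H]] := HG _ _ Ha.
  + left; apply: connect_trans H1; exact: connect1.
  + right; rewrite H; exact: connect0.
  + right; rewrite -H; exact: connect1.
- right; apply: connect_trans H1; exact: connect1.
Qed.

Lemma connect_two_sides (G G' : rel T) c d b :
  (forall u v, G u v -> G' u v \/ v = c \/ v = d) ->
  connect G c b -> connect G' c b \/ connect G' d b.
Proof.
move=> HG /connectP [s Hp ->].
suff: forall a, connect G' c a \/ connect G' d a -> path G a s ->
  connect G' c (last a s) \/ connect G' d (last a s).
  by apply; [left; exact: connect0|].
elim: s {Hp} => [|a1 s IH] a /=; first by [].
move=> H0 /andP [Ha Hp]; apply: IH => //.
have [H|[H|H]] := HG _ _ Ha.
- case: H0 => H0; [left|right]; apply: connect_trans H0 _; exact: connect1.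
- left; rewrite H; exact: connect0.
- right; rewrite H; exact: connect0.
Qed.
End Conn.

Section Tree.
Variable R : realType.
Variables m n p : nat.
Variable I : instance R m n p.
Variable x : 'I_n -> R.
Hypothesis Htree : spanning_tree I x.

Notation Tr := (tadj I x).
Notation inEd := (in_edge I x).

Lemma tadj_sym (ex : option (edge m n p)) : symmetric (Tr ex).
Proof.
move=> a b; apply/existsP/existsP => -[e He]; exists e;
by case/and3P: He => -> -> /orP [] ->; rewrite ?orbT.
Qed.

Lemma tadjE (ex : option (edge m n p)) a b : Tr ex a b = [exists e, [&& inEd e, Some e != ex & (ends e == (a, b)) || (ends e == (b, a))]].
Proof. by []. Qed.

Lemma connect_symT (ex : option (edge m n p)) a b : connect (Tr ex) a b = connect (Tr ex) b a.
Proof. exact: (sym_connect_sym (@tadj_sym ex)). Qed.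

Definition other (e : edge m n p) v := if (ends e).1 == v then (ends e).2 else (ends e).1.
Definition incident (v : vertex m n p) (e : edge m n p) := ((ends e).1 == v) || ((ends e).2 == v).

Lemma ends_neq (e : edge m n p) : (ends e).1 != (ends e).2.
Proof. by case: e => [[[k j]|[i j]]|[j i]]. Qed.

Lemma bridge (e : edge m n p) : inEd e -> ~~ connect (Tr (Some e)) (ends e).1 (ends e).2.
Proof. by move=> He; apply: Htree.2. Qed.

Lemma bridge_inc (e : edge m n p) v : inEd e -> incident v e -> ~~ connect (Tr (Some e)) v (other e v).
Proof.
move=> He; rewrite /incident /other; case/orP => /eqP Hv.
- by rewrite -Hv eqxx; apply: bridge.
- have := ends_neq e; rewrite Hv eq_sym => /negbTE ->.
  by rewrite connect_symT -Hv; apply: bridge.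
Qed.

Lemma inc_step (e : edge m n p) v : inEd e -> incident v e -> Tr None v (other e v).
Proof.
move=> He; rewrite /incident /other; apply: contraLR => Hn.
apply/negP => Hi; move: Hn; rewrite tadjE; apply/negP; rewrite negbK; apply/existsP; exists e.
rewrite He /=; case: ifP => [/eqP <-|Hne].
- by rewrite -surjective_pairing eqxx.
- move: Hi; rewrite Hne /= => /eqP <-; by rewrite -surjective_pairing eqxx orbT.
Qed.

Lemma inc_step_ne (e f : edge m n p) v : inEd e -> incident v e -> f != e -> Tr (Some f) v (other e v).
Proof.
move=> He; rewrite /incident /other => Hi Hfe; rewrite tadjE; apply/existsP; exists e.
rewrite He /= eq_sym Hfe /=; case: ifP => [/eqP <-|Hne].
- by rewrite -surjective_pairing eqxx.
- move: Hi; rewrite Hne /= => /eqP <-; by rewrite -surjective_pairing eqxx orbT.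
Qed.

Lemma two_sides (e : edge m n p) y : inEd e ->
  connect (Tr (Some e)) (ends e).1 y \/ connect (Tr (Some e)) (ends e).2 y.
Proof.
move=> He; apply: (@connect_two_sides _ (Tr None)); last exact: Htree.1.
move=> u w /existsP [f /and3P [Hf _ Hends]].
case: (eqVneq f e) => [Efe|Hne].
- right; move: Hends; rewrite Efe => /orP [] /eqP ->; by [right|left].
- left; apply/existsP; exists f; by rewrite Hf Hends /= andbT.
Qed.

Definition far v (e : edge m n p) y := ~~ connect (Tr (Some e)) v y.

Lemma part_exists v y : y = v \/ exists e, [/\ inEd e, incident v e & far v e y].
Proof.
have := Htree.1 v y; move=> /connectP [s Hp ->]; clear y.
suff: forall a, (a = v \/ exists e, [/\ inEd e, incident v e & far v e a]) -> path (Tr None) a s ->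
   (last a s = v \/ exists e, [/\ inEd e, incident v e & far v e (last a s)]).
  by move/(_ v (or_introl erefl) Hp).
elim: s {Hp} => [|a1 s IH] a /=; first by [].
move=> H0 /andP [Ha Hp]; apply: IH => //.
case/existsP: Ha => f /and3P [Hf _ Hends].
case: H0 => [Eav|[e [He Hi Hfar]]].
- right; exists f; split => //.
  + by rewrite /incident; case/orP: Hends => /eqP ->; rewrite /= Eav eqxx ?orbT.
  + have := bridge_inc (v := v) Hf.
    have -> : other f v = a1.
      by rewrite /other; case/orP: Hends => /eqP -> /=; rewrite -Eav ?eqxx //; 
         case: ifP => // /eqP ->.
    apply; rewrite /incident; case/orP: Hends => /eqP ->; by rewrite /= Eav eqxx ?orbT.
- case: (eqVneq f e) => [Efe|Hne].
  + (* a is far from v, so a is the other end; a1 = v *)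
    left; move: Hends Hi Hfar; rewrite Efe /incident /far.
    case: (ends e) => [e1 e2] /=.
    case/orP=> /eqP [-> ->]; case/orP=> /eqP Ev //; subst; rewrite ?connect0 //.
  + right; exists e; split => //; move: Hfar; rewrite /far; apply: contra => Hc.
    apply: connect_trans Hc _; rewrite connect_symT; apply: connect1.
    apply/existsP; exists f; rewrite Hf /=; apply/andP; split.
      by apply/eqP => -[] /eqP; rewrite (negbTE Hne).
    by case/orP: Hends => ->; rewrite ?orbT.
Qed.


Lemma two_sides_inc (e : edge m n p) v y : inEd e -> incident v e ->
  connect (Tr (Some e)) v y \/ connect (Tr (Some e)) (other e v) y.
Proof.
move=> He; rewrite /incident /other => Hi; have [H|H] := two_sides y He.
- case: ifP => [/eqP <-|Hne]; first by left.
  by right.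
- case: ifP => [/eqP <-|Hne]; first by right.
  by move: Hi; rewrite Hne /= => /eqP <-; left.
Qed.

Lemma part_unique v y (e1 e2 : edge m n p) : inEd e1 -> inEd e2 ->
  incident v e1 -> incident v e2 -> far v e1 y -> far v e2 y -> e1 = e2.
Proof.
move=> He1 He2 Hi1 Hi2 Hf1 Hf2; case: (eqVneq e1 e2) => // Hne; exfalso.
have Hc2 : connect (Tr (Some e2)) (other e2 v) y.
  by case: (two_sides_inc y He2 Hi2) => // H; move: Hf2; rewrite /far H.
have HG : forall u w, Tr (Some e2) u w -> Tr (Some e1) u w \/ u = v \/ w = v.
  move=> u w /existsP [f /and3P [Hf Hfe Hends]].
  case: (eqVneq f e1) => [Efe|Hfne].
  + right; move: Hi1 Hends; rewrite -Efe /incident.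
    case: (ends f) => [a b] /=.
    by case/orP => /eqP Hv /orP [] /eqP [Ha Hb]; subst; auto.
  + left; apply/existsP; exists f; rewrite Hf Hends andbT /=.
    by apply/eqP => -[] /eqP; rewrite (negbTE Hfne).
have [H|H] := connect_sub_or HG Hc2.
- move/negP: Hf1; apply.
  apply: connect_trans H; apply: connect1; apply: inc_step_ne => //; by rewrite eq_sym.
- by move: (bridge_inc He2 Hi2); rewrite connect_symT H.
Qed.

Lemma part_pred1 v y : y != v ->
  exists e0, [pred e | inEd e && incident v e && far v e y] =1 pred1 e0.
Proof.
move=> Hyv; have [Eyv|[e0 [H1 H2 H3]]] := part_exists v y; first by rewrite Eyv eqxx in Hyv.
exists e0 => e /=; apply/idP/idP.
- case/andP=> /andP [He Hi] Hf; apply/eqP; exact: (part_unique He H1 Hi H2 Hf H3).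
- by move/eqP ->; rewrite H1 H2 H3.
Qed.

Lemma far_refl v (e : edge m n p) : far v e v = false.
Proof. by rewrite /far connect0. Qed.


Definition vend (e : edge m n p) : vertex m n p :=
  match e with inl (inl (k, j)) => vv m p j | inl (inr (i, j)) => vv m p j | inr (j, i) => vv m p j end.

Lemma incidentE v (e : edge m n p) : incident v e = (uw_end e == v) || (vend e == v).
Proof. by case: e => [[[k j]|[i j]]|[j i]]; rewrite /incident //= orbC. Qed.

Lemma uw_ne_vend (e : edge m n p) : uw_end e != vend e.
Proof. by case: e => [[[k j]|[i j]]|[j i]]. Qed.

Lemma other_uw (e : edge m n p) : other e (uw_end e) = vend e.
Proof. by case: e => [[[k j]|[i j]]|[j i]]; rewrite /other /= ?eqxx. Qed.

Lemma other_vend (e : edge m n p) : other e (vend e) = uw_end e.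
Proof. by case: e => [[[k j]|[i j]]|[j i]]; rewrite /other /= ?eqxx. Qed.

Lemma inc_uw (e : edge m n p) : incident (uw_end e) e.
Proof. by rewrite incidentE eqxx. Qed.
Lemma inc_vend (e : edge m n p) : incident (vend e) e.
Proof. by rewrite incidentE eqxx orbT. Qed.

Definition Wt (v : vertex m n p) : R :=
  match v with inl (inl k) => (Defs.mup I k)%:R | inl (inr j) => - (mum I j)%:R | inr _ => 0 end.

Hypothesis Hbal : balanced I.

Lemma Wtot : \sum_v Wt v = 0.
Proof.
rewrite big_sumType /= big_sumType /= [X in _ + X]big1 // addr0.
by rewrite sumrN -!natr_sum Hbal subrr.
Qed.

Definition phi (e : edge m n p) : R := \sum_(y | connect (Tr (Some e)) (uw_end e) y) Wt y.

Lemma phi_uw (e : edge m n p) : phi e = - \sum_(y | far (uw_end e) e y) Wt y.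
Proof.
apply/eqP; rewrite eq_sym eqr_oppLR; apply/eqP.
have := Wtot; rewrite (bigID (fun y => connect (Tr (Some e)) (uw_end e) y)) /= => /eqP.
by rewrite /phi /far addr_eq0 => /eqP ->; rewrite opprK.
Qed.

Lemma phi_vend (e : edge m n p) : inEd e -> phi e = \sum_(y | far (vend e) e y) Wt y.
Proof.
move=> He; apply: eq_bigl => y; rewrite /far.
have [H|H] := two_sides_inc y He (inc_vend e); rewrite ?other_vend in H.
- rewrite H /=; apply/negP => Hc; move: (bridge_inc He (inc_vend e)).
  by rewrite other_vend (connect_trans H) // connect_symT.
- rewrite H; apply/esym/negP => Hc; move: (bridge_inc He (inc_vend e)).
  by rewrite other_vend (connect_trans Hc) // connect_symT.
Qed.

Lemma conservation v :
  Wt v = \sum_(e | inEd e && (uw_end e == v)) phi e - \sum_(e | inEd e && (vend e == v)) phi e.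
Proof.
pose F e := \sum_(y | far v e y) Wt y.
have E1 : \sum_(e | inEd e && (uw_end e == v)) phi e = - \sum_(e | inEd e && (uw_end e == v)) F e.
  rewrite -sumrN; apply: eq_bigr => e /andP [_ /eqP Hv]; rewrite /F -Hv; exact: phi_uw.
have E2 : \sum_(e | inEd e && (vend e == v)) phi e = \sum_(e | inEd e && (vend e == v)) F e.
  apply: eq_bigr => e /andP [He /eqP Hv]; rewrite /F -Hv; exact: phi_vend.
have E3 : \sum_(e | inEd e && incident v e) F e =
   \sum_(e | inEd e && (uw_end e == v)) F e + \sum_(e | inEd e && (vend e == v)) F e.
  rewrite (bigID (fun e => uw_end e == v)) /=; congr (_ + _); apply: eq_bigl => e.
  - by rewrite incidentE; case: (uw_end e == v); rewrite ?andbT ?andbF.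
  - rewrite incidentE; case: (eqVneq (uw_end e) v) => [Eu|Hu]; rewrite ?andbF /=.
      by rewrite -Eu eq_sym (negbTE (uw_ne_vend e)) andbF.
    by rewrite andbT.
rewrite E1 E2 -opprD -E3.
have E4 : \sum_(e | inEd e && incident v e) F e =
    \sum_y \sum_(e | inEd e && incident v e && far v e y) Wt y.
  rewrite (eq_bigr (fun e => \sum_y (if far v e y then Wt y else 0))); last first.
    by move=> e _; rewrite /F big_mkcond.
  rewrite exchange_big /=; apply: eq_bigr => y _; by rewrite [RHS]big_mkcondr.
rewrite E4 (bigD1 v) //= big_pred0; last by move=> e; rewrite far_refl andbF.
rewrite add0r (eq_bigr (fun y => Wt y)); last first.
  move=> y Hy; have [e0 He0] := part_pred1 Hy; by rewrite (big_pred1 e0).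
have := Wtot; rewrite (bigD1 v) //= => /eqP; rewrite addr_eq0 => /eqP ->.
by [].
Qed.


Lemma flow_identity (beta : vertex m n p -> R) :
  \sum_(e | inEd e) phi e * (beta (uw_end e) - beta (vend e)) = \sum_v beta v * Wt v.
Proof.
under [RHS]eq_bigr => v _ do rewrite conservation mulrBr !mulr_sumr.
rewrite sumrB.
under eq_bigr => e _ do rewrite mulrBr.
rewrite sumrB; congr (_ - _).
- rewrite (partition_big (@uw_end m n p) predT) //=.
  apply: eq_bigr => v _; apply: eq_bigr => e /andP [_ /eqP ->]; by rewrite mulrC.
- rewrite (partition_big (@vend) predT) //=.
  apply: eq_bigr => v _; apply: eq_bigr => e /andP [_ /eqP ->]; by rewrite mulrC.
Qed.

Hypothesis Hrows : rows_finite I.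
Hypothesis HxS : inS I x.

Lemma Aent_geP i j a : Ap I i j = Some a -> exists b, Aent I i j = Some b /\ a <= b.
Proof. by move=> H; apply: omax_geL. Qed.
Lemma Aent_geM i j a : Am I i j = Some a -> exists b, Aent I i j = Some b /\ a <= b.
Proof. by move=> H; apply: omax_geR. Qed.
Lemma Aent_cases i j b : Aent I i j = Some b -> Ap I i j = Some b \/ Am I i j = Some b.
Proof. exact: omax_someP. Qed.

Definition Ma i := odflt 0 (tmaxv (Aent I i) x).
Definition Mc k := odflt 0 (tmaxv (Cm I k) x).

Lemma tmaxv_some (a : 'I_n -> option R) y j c : a j = Some c ->
  tmaxv a y = Some (odflt 0 (tmaxv a y)).
Proof. by move=> /(tmaxv_ge y) [v [-> _]]. Qed.

Lemma MaE i : tmaxv (Aent I i) x = Some (Ma i).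
Proof.
have [j Hj] := Hrows.1 i; case E: (Aent I i j) Hj => [c|] // _.
exact: tmaxv_some E.
Qed.

Lemma McE k : tmaxv (Cm I k) x = Some (Mc k).
Proof.
have [j Hj] := Hrows.2 k; case E: (Cm I k j) Hj => [c|] // _.
exact: tmaxv_some E.
Qed.

Lemma Cy_some k (y : 'I_n -> R) : tmaxv (Cm I k) y = Some (odflt 0 (tmaxv (Cm I k) y)).
Proof.
have [j Hj] := Hrows.2 k; case E: (Cm I k j) Hj => [c|] // _.
exact: tmaxv_some E.
Qed.

Lemma Aent_le i j b : Aent I i j = Some b -> b + x j <= Ma i.
Proof. move=> /(tmaxv_ge x) [v [Hv Hle]]; by move: Hv; rewrite MaE => -[->]. Qed.

Lemma C_le k j c : Cm I k j = Some c -> c + x j <= Mc k.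
Proof. move=> /(tmaxv_ge x) [v [Hv Hle]]; by move: Hv; rewrite McE => -[->]. Qed.

Lemma Ma_att i : exists j b, Aent I i j = Some b /\ Ma i = b + x j.
Proof. exact: tmaxv_att (MaE i). Qed.

Lemma Mc_att k : exists j c, Cm I k j = Some c /\ Mc k = c + x j.
Proof. exact: tmaxv_att (McE k). Qed.

Lemma E1P k j : inEd (inl (inl (k, j))) <-> exists c, Cm I k j = Some c /\ Mc k = c + x j.
Proof.
rewrite /= McE; split.
- by case E: (Cm I k j) => [c|] //= /eqP [->]; exists c.
- by case=> c [-> ->].
Qed.

Lemma E2P i j : inEd (inl (inr (i, j))) <-> exists c, Am I i j = Some c /\ Ma i = c + x j.
Proof.
rewrite /= MaE; split.
- by case E: (Am I i j) => [c|] //= /eqP [->]; exists c.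
- by case=> c [-> ->].
Qed.

Lemma E3P i j : inEd (inr (j, i)) <-> exists c, Ap I i j = Some c /\ Ma i = c + x j.
Proof.
rewrite /= MaE; split.
- by case E: (Ap I i j) => [c|] //= /eqP [->]; exists c.
- by case=> c [-> ->].
Qed.

Lemma E3_exists i : exists j, inEd (inr (j, i)).
Proof.
have [j0 [b [Hb HM]]] := Ma_att i.
suff [v [Hv Hge]] : exists v, tmaxv (Ap I i) x = Some v /\ Ma i <= v.
  have [j [a [Ha Hva]]] := tmaxv_att Hv.
  exists j; apply/E3P; exists a; split => //.
  have [b' [Hb' Hab']] := Aent_geP Ha; have := Aent_le Hb'.
  move=> Hb'M; apply/eqP; rewrite eq_le; apply/andP; split; first by rewrite -Hva.
  apply: le_trans Hb'M; by rewrite lerD2r.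
have := HxS i; rewrite /ole.
case/Aent_cases: Hb => H.
- have [v [-> Hv]] := tmaxv_ge x H; by exists v; rewrite HM.
- have [v [Hv Hle]] := tmaxv_ge x H; rewrite Hv.
  case E: (tmaxv (Ap I i) x) => [w|] // Hvw; exists w; split => //.
  by rewrite HM; apply: le_trans Hle Hvw.
Qed.

Lemma epsA d i j b : below_eps I x d -> Aent I i j = Some b -> b + x j < Ma i ->
  b + x j + d < Ma i.
Proof.
move=> [HA _] Hb Hlt; have [j0 [b0 [Hb0 HM]]] := Ma_att i.
have Hneg : (b + x j) - (b0 + x j0) < 0 by rewrite -HM subr_lt0.
have := HA i j j0 b b0 Hb Hb0; rewrite ltr0_norm // oppr_gt0 => /(_ Hneg).
rewrite HM; lra.
Qed.

Lemma epsC d k j c : below_eps I x d -> Cm I k j = Some c -> c + x j < Mc k ->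
  c + x j + d < Mc k.
Proof.
move=> [_ HC] Hc Hlt; have [j0 [c0 [Hc0 HM]]] := Mc_att k.
have Hneg : (c + x j) - (c0 + x j0) < 0 by rewrite -HM subr_lt0.
have := HC k j j0 c c0 Hc Hc0; rewrite ltr0_norm // oppr_gt0 => /(_ Hneg).
rewrite HM; lra.
Qed.

Lemma side_step (e f : edge m n p) : inEd f -> f != e -> Tr (Some e) (vend f) (uw_end f).
Proof.
move=> Hf Hne; apply/existsP; exists f; rewrite Hf /=; apply/andP; split.
  by apply/eqP => -[] /eqP; rewrite (negbTE Hne).
by case: (f) => [[[k j]|[i j]]|[j i]]; rewrite /= eqxx ?orbT.
Qed.

Lemma side_uw (e f : edge m n p) : inEd f ->
  connect (Tr (Some e)) (uw_end e) (vend f) -> connect (Tr (Some e)) (uw_end e) (uw_end f).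
Proof.
move=> Hf H; case: (eqVneq f e) => [->|Hne]; first exact: connect0.
apply: connect_trans H _; apply: connect1; exact: side_step.
Qed.

Lemma side_vend (e f : edge m n p) : inEd f -> f != e ->
  connect (Tr (Some e)) (uw_end e) (uw_end f) -> connect (Tr (Some e)) (uw_end e) (vend f).
Proof.
move=> Hf Hne H; apply: connect_trans H _; apply: connect1.
rewrite tadj_sym; exact: side_step.
Qed.

Lemma VTP (e : edge m n p) j : (j \in VT I x e) = connect (Tr (Some e)) (uw_end e) (vv m p j).
Proof. by rewrite inE. Qed.

Lemma shift_C_le (e : edge m n p) d k : inEd e -> 0 < d -> below_eps I x d ->
  odflt 0 (tmaxv (Cm I k) (shift x (VT I x e) d)) <=
  Mc k + (if connect (Tr (Some e)) (uw_end e) (vu m n k) then d else 0).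
Proof.
move=> He Hd Heps; apply: (tmaxv_le (Cy_some k _)) => j c Hc.
have Hcx := C_le Hc; rewrite /shift.
case Hside: (connect (Tr (Some e)) (uw_end e) (vu m n k)).
  by case: (j \in VT I x e); lra.
case HjV: (j \in VT I x e); last lra.
have Hlt : c + x j < Mc k.
  rewrite lt_neqAle Hcx andbT; apply/negP => /eqP Heq.
  have Hf : inEd (inl (inl (k, j))) by apply/E1P; exists c.
  move: Hside; rewrite (side_uw Hf) //; by rewrite VTP in HjV.
have := epsC Heps Hc Hlt; lra.
Qed.

Lemma fobj_diff (y : 'I_n -> R) : fobj I y - fobj I x =
  \sum_k (Defs.mup I k)%:R * (odflt 0 (tmaxv (Cm I k) y) - Mc k) -
  \sum_j (mum I j)%:R * (y j - x j).
Proof.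
rewrite /fobj /Mc.
have H1 : \sum_k (Defs.mup I k)%:R * (odflt 0 (tmaxv (Cm I k) y) - odflt 0 (tmaxv (Cm I k) x)) =
  \sum_k (Defs.mup I k)%:R * odflt 0 (tmaxv (Cm I k) y) - \sum_k (Defs.mup I k)%:R * odflt 0 (tmaxv (Cm I k) x).
  by rewrite -sumrB; apply: eq_bigr => k _; rewrite mulrBr.
have H2 : \sum_j (mum I j)%:R * (y j - x j) = \sum_j (mum I j)%:R * y j - \sum_j (mum I j)%:R * x j.
  by rewrite -sumrB; apply: eq_bigr => j _; rewrite mulrBr.
rewrite H1 H2; lra.
Qed.

Lemma phi_split (e : edge m n p) : phi e =
  \sum_k (if connect (Tr (Some e)) (uw_end e) (vu m n k) then (Defs.mup I k)%:R else 0) -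
  \sum_j (if j \in VT I x e then (mum I j)%:R else 0).
Proof.
rewrite /phi big_mkcond big_sumType /= big_sumType /= [X in _ + X]big1; last first.
  by move=> i _; case: ifP.
rewrite addr0 -sumrN; congr (_ + _); apply: eq_bigr => j _; rewrite VTP.
by case: ifP; rewrite ?oppr0.
Qed.

Lemma shift_fobj (e : edge m n p) d : inEd e -> 0 < d -> below_eps I x d ->
  fobj I (shift x (VT I x e) d) <= fobj I x + d * phi e.
Proof.
move=> He Hd Heps.
suff : fobj I (shift x (VT I x e) d) - fobj I x <= d * phi e by lra.
rewrite fobj_diff phi_split mulrBr !mulr_sumr.
apply: lerB.
- apply: ler_sum => k _.
  have := shift_C_le k He Hd Heps.
  case: (connect _ _ _) => H.
  + rewrite [d * _]mulrC; apply: ler_wpM2l => //; lra.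
  + rewrite mulr0; apply: mulr_ge0_le0 => //; lra.
- apply: ler_sum => j _; rewrite /shift; case: (j \in VT I x e).
  + by rewrite addrC addKr mulrC.
  + by rewrite mulr0 addr0 subrr mulr0.
Qed.

Lemma Ecirc_inEd (e : edge m n p) : in_Ecirc I x e -> inEd e.
Proof. by case: e => [[[k j]|[i j]]|[j i]] //= /andP []. Qed.

Lemma E3_other (e : edge m n p) i : in_Ecirc I x e ->
  exists j, inEd (inr (j, i)) /\ inr (j, i) != e.
Proof.
move=> He; have [j1 H1] := E3_exists i.
case: (eqVneq (inr (j1, i)) e) => [Ee|Hne]; last by exists j1.
move: He; rewrite -Ee /= => /andP [_ /card_gt1P [a [b [Ha Hb Hab]]]].
rewrite inE in Ha; rewrite inE in Hb.
case: (eqVneq a j1) => [Eaj|Hne].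
- exists b; split => //; apply/eqP => -[Ebj]; move: Hab; by rewrite Eaj Ebj eqxx.
- exists a; split => //; apply/eqP => -[Eaj]; by rewrite Eaj eqxx in Hne.
Qed.

Lemma shift_inS (e : edge m n p) d : in_Ecirc I x e -> 0 < d -> below_eps I x d ->
  inS I (shift x (VT I x e) d).
Proof.
move=> He Hd Heps i; have HeT := Ecirc_inEd He; rewrite /ole.
set s := shift x (VT I x e) d.
have Hs j : x j <= s j <= x j + d.
  by rewrite /s /shift; case: (j \in VT I x e); apply/andP; split; lra.
case Hside: (connect (Tr (Some e)) (uw_end e) (vw n p i)).
- have [j' [Hj' Hne]] := E3_other i He.
  have Hj'V : j' \in VT I x e by rewrite VTP; exact: (side_vend Hj' Hne Hside).
  have [a [Ha HMa]] := (E3P i j').1 Hj'.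
  have [v2 [Hv2 Hle2]] := tmaxv_ge s Ha.
  rewrite Hv2; case E: (tmaxv (Am I i) s) => [v1|] //.
  have Hsj' : s j' = x j' + d by rewrite /s /shift Hj'V.
  suff : v1 <= Ma i + d by lra.
  apply: (tmaxv_le E) => j c Hc.
  have [b [Hb Hcb]] := Aent_geM Hc; have := Aent_le Hb; have := Hs j; lra.
- have [j3 Hj3] := E3_exists i; have [a [Ha HMa]] := (E3P i j3).1 Hj3.
  have [v2 [Hv2 Hle2]] := tmaxv_ge s Ha.
  rewrite Hv2; case E: (tmaxv (Am I i) s) => [v1|] //.
  have := Hs j3 => /andP [Hs3 _].
  suff : v1 <= Ma i by lra.
  apply: (tmaxv_le E) => j c Hc.
  have [b [Hb Hcb]] := Aent_geM Hc; have HbM := Aent_le Hb.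
  case HjV: (j \in VT I x e); last first.
    have -> : s j = x j by rewrite /s /shift HjV addr0.
    lra.
  have Hsj : s j = x j + d by rewrite /s /shift HjV.
  rewrite Hsj; case: (ltrP (b + x j) (Ma i)) => Hlt.
    by have := epsA Heps Hb Hlt; lra.
  have HbE : Ma i = b + x j by apply/eqP; rewrite eq_le HbM Hlt.
  suff : connect (Tr (Some e)) (uw_end e) (vw n p i) by rewrite Hside.
  rewrite VTP in HjV.
  case: (eqVneq c b) => [Ecb|Hcb'].
  + have Hf : inEd (inl (inr (i, j))) by apply/E2P; exists c; split => //; rewrite Ecb.
    exact: (side_uw Hf HjV).
  + case/Aent_cases: Hb => Hb.
    * have Hf : inEd (inr (j, i)) by apply/E3P; exists b; split.
      exact: (side_uw Hf HjV).
    * by move: Hc; rewrite Hb => -[] /eqP; rewrite eq_sym (negbTE Hcb').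
Qed.

Lemma exists_argmax (P : pred 'I_n) (g : 'I_n -> R) j0 : P j0 ->
  exists j, P j /\ forall j', P j' -> g j' <= g j.
Proof.
move=> H0.
suff [j [Hj Hall]] : exists j, P j /\ forall j', j' \in enum 'I_n -> P j' -> g j' <= g j.
  by exists j; split => // j' Hj'; apply: Hall; rewrite ?mem_enum.
elim: (enum 'I_n) => [|a s [j [Hj Hall]]]; first by exists j0.
case Ha: (P a && (g j < g a)).
- case/andP: Ha => Pa Hlt; exists a; split => // j'; rewrite in_cons.
  case/orP => [/eqP -> //|Hs /(Hall _ Hs) Hle]; exact: le_trans Hle (ltW Hlt).
- exists j; split => // j'; rewrite in_cons; case/orP => [/eqP ->|Hs]; last exact: Hall.
  by move=> Pa; move: Ha; rewrite Pa /= => /negbT; rewrite -leNgt.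
Qed.

Lemma feas_E2 (y : 'I_n -> R) d0 : 0 < d0 -> below_eps I x (d0 + d0) -> inS I y ->
  (forall j, `|x j - y j| < d0) -> forall i j, inEd (inl (inr (i, j))) ->
  exists j', inEd (inr (j', i)) /\ y j - x j <= y j' - x j'.
Proof.
move=> Hd0 Heps HyS Hy i j Hij.
have Hz k : - d0 < x k - y k < d0 by rewrite -ltr_norml.
have [c [Hc HMc]] := (E2P i j).1 Hij.
have [v1 [Hv1 Hle1]] := tmaxv_ge y Hc.
have := HyS i; rewrite /ole Hv1; case E: (tmaxv (Ap I i) y) => [v2|] // Hv12.
have [j' [a [Ha Hv2]]] := tmaxv_att E.
have [b [Hb Hab]] := Aent_geP Ha; have HbM := Aent_le Hb.
have Haj : Ma i = a + x j'.
  case: (ltrP (a + x j') (Ma i)) => Hlt; last first.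
    by apply/eqP; rewrite eq_le Hlt /=; apply: le_trans HbM; rewrite lerD2r.
  exfalso; case: (ltrP (b + x j') (Ma i)) => Hlt2.
  - have := epsA Heps Hb Hlt2; have := Hz j; have := Hz j'; move=> /andP [? ?] /andP [? ?]; lra.
  - have Hbe : Ma i = b + x j' by apply/eqP; rewrite eq_le HbM Hlt2.
    have Hab' : a < b by lra.
    case/Aent_cases: Hb => Hb.
    + move: Ha; rewrite Hb => -[] Eab; lra.
    + have [v1' [Hv1' Hle1']] := tmaxv_ge y Hb.
      move: Hv1'; rewrite Hv1 => -[] Ev; lra.
exists j'; split; first by apply/E3P; exists a.
lra.
Qed.

Lemma local_opt_of (y : 'I_n -> R) d0 : (forall e, in_Ecirc I x e -> 0 <= phi e) ->
  0 < d0 -> below_eps I x (d0 + d0) -> inS I y ->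
  (forall j, `|x j - y j| < d0) -> fobj I x <= fobj I y.
Proof.
move=> Hphi Hd0 Heps HyS Hy.
pose z j := y j - x j.
have Hex : forall i : 'I_m, exists ci : R,
    exists j, [/\ inEd (inr (j, i)), ci = z j & forall j', inEd (inr (j', i)) -> z j' <= ci].
  move=> i; have [j0 Hj0] := E3_exists i.
  have [j [Hj Hall]] := exists_argmax (P := fun j => inEd (inr (j, i))) z Hj0.
  by exists (z j), j.
have [c Hc] := fin_all_exists Hex.
pose beta (v : vertex m n p) := match v with
  | inl (inl k) => odflt 0 (tmaxv (Cm I k) y) - Mc k
  | inl (inr j) => z j
  | inr i => c i end.
have Hid := flow_identity beta.
have HR : \sum_v beta v * Wt v = fobj I y - fobj I x.
  rewrite fobj_diff big_sumType /= big_sumType /= [X in _ + X]big1; last first.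
    by move=> i _; rewrite mulr0.
  rewrite addr0 -sumrN; congr (_ + _); apply: eq_bigr => j _; by rewrite ?mulrN mulrC.
suff : 0 <= \sum_(e | inEd e) phi e * (beta (uw_end e) - beta (vend e)) by rewrite Hid HR subr_ge0.
apply: sumr_ge0 => e He.
case: e He => [[[k j]|[i j]]|[j i]] He /=.
- apply: mulr_ge0; first exact: Hphi.
  have [cc [Hcc HM]] := (E1P k j).1 He.
  have [v [Hv Hle]] := tmaxv_ge y Hcc.
  rewrite Hv /= /z; lra.
- apply: mulr_ge0; first exact: Hphi.
  have [j' [Hj' Hz']] := feas_E2 Hd0 Heps HyS Hy He.
  have [j1 [_ _ Hall]] := Hc i; have := Hall _ Hj'; rewrite /z in Hz' *; lra.
- have [j1 [Hj1 Hcj1 Hall]] := Hc i.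
  case Hcard: (1 < #|Nminus I x i|)%N.
  + apply: mulr_ge0; first by apply: Hphi; apply/andP; split; rewrite ?Hcard.
    by have := Hall _ He; rewrite subr_ge0.
  + have Hle1 : (#|Nminus I x i| <= 1)%N by rewrite leqNgt Hcard.
    have Ej : j = j1.
      by apply: (card_le1_eqP Hle1); rewrite inE.
    by rewrite Hcj1 Ej subrr mulr0.
Qed.

Lemma pos_below (T : finType) (g : T -> R) : exists d, 0 < d /\ forall t, 0 < g t -> d < g t.
Proof.
suff [d [Hd Hall]] : exists d, 0 < d /\ forall t, t \in enum T -> 0 < g t -> d < g t.
  by exists d; split => // t; apply: Hall; rewrite mem_enum.
elim: (enum T) => [|a s [d [Hd Hall]]]; first by exists 1; split.
case: (ltrP 0 (g a)) => Ha.
- exists (Num.min d (g a / 2)); split; first by rewrite lt_min Hd divr_gt0.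
  move=> t; rewrite in_cons; case/orP => [/eqP -> _|Hs Hg].
  + rewrite gt_min; apply/orP; right; lra.
  + rewrite gt_min (Hall t Hs Hg) //.
- exists d; split => // t; rewrite in_cons; case/orP => [/eqP -> Hg|Hs]; last exact: Hall.
  lra.
Qed.

Lemma exists_below_eps : exists d, 0 < d /\ below_eps I x d.
Proof.
pose gA (t : 'I_m * 'I_n * 'I_n) := let: (i, j1, j2) := t in
  match Aent I i j1, Aent I i j2 with
  | Some a1, Some a2 => `|(a1 + x j1) - (a2 + x j2)| | _, _ => 0 end.
pose gC (t : 'I_p * 'I_n * 'I_n) := let: (k, j1, j2) := t in
  match Cm I k j1, Cm I k j2 with
  | Some a1, Some a2 => `|(a1 + x j1) - (a2 + x j2)| | _, _ => 0 end.
have [dA [HdA HA]] := pos_below gA.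
have [dC [HdC HC]] := pos_below gC.
exists (Num.min dA dC); split; first by rewrite lt_min HdA HdC.
split.
- move=> i j1 j2 a1 a2 H1 H2 Hpos; have := HA (i, j1, j2); rewrite /gA H1 H2 => /(_ Hpos).
  by rewrite gt_min => ->.
- move=> k j1 j2 a1 a2 H1 H2 Hpos; have := HC (k, j1, j2); rewrite /gC H1 H2 => /(_ Hpos).
  by rewrite gt_min => ->; rewrite orbT.
Qed.

Lemma main_contra : ~ local_optimum I x ->
  exists e, in_Ecirc I x e /\ feasible_descent I x (VT I x e).
Proof.
move=> Hnlo; apply: NNPP => Hno; apply: Hnlo.
have Hphi : forall e, in_Ecirc I x e -> 0 <= phi e.
  move=> e He.
  have Hnfd : ~ feasible_descent I x (VT I x e) by move=> H; apply: Hno; exists e.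
  have [d [Hd Heps Hnot]] : exists d, [/\ 0 < d, below_eps I x d &
      ~ (inS I (shift x (VT I x e) d) /\ fobj I (shift x (VT I x e) d) < fobj I x)].
    apply: NNPP => H; apply: Hnfd => d Hd Heps; apply: NNPP => H'; apply: H; by exists d.
  have HS := shift_inS He Hd Heps.
  have Hf := shift_fobj (Ecirc_inEd He) Hd Heps.
  have Hge : fobj I x <= fobj I (shift x (VT I x e) d).
    by rewrite leNgt; apply/negP => Hlt; apply: Hnot.
  have : 0 <= d * phi e by lra.
  by rewrite pmulr_rge0.
have [d1 [Hd1 Heps]] := exists_below_eps.
exists (d1 / 2); first by rewrite divr_gt0.
move=> y HyS Hy; apply: (local_opt_of (d0 := d1 / 2)) => //.
  by rewrite divr_gt0.
by have -> : d1 / 2 + d1 / 2 = d1 by lra.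
Qed.

End Tree.

Theorem theorem5p3 (R : realType) (m n p : nat) (I : instance R m n p)
  (Hrows : rows_finite I) (Hbal : balanced I) (Hconn : data_connected I)
  (Hnd : nondegenerate_inst I)
  (x : 'I_n -> R) (HxS : inS I x) (Htree : spanning_tree I x) :
  ~ local_optimum I x ->
  exists e : edge m n p, in_Ecirc I x e /\ feasible_descent I x (VT I x e).
Proof. exact: (main_contra Htree Hbal Hrows HxS). Qed.
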